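(* Let $H_1$ and $H_2$ be finitely generated groups such that $H_2$ is infinite and does not have uniform exponential growth. Then for any constants $\alpha,\beta>0$ there exists a finite generating set $U$ of $H_1\times H_2$ such that $|U^n|<(\alpha|U|)^{\beta n}$ for some $n\in\mathbb{N}$.
   Context: For a finitely generated group $G$ and finite generating set $S$, $B_S(n)$ is the ball of radius $n$ about the identity in the word metric of $S$, $\omega(G,S)=\lim_{n\to\infty}|B_S(n)|^{1/n}$ and $\omega(G)=\inf_S\omega(G,S)$ over finite generating sets; $G$ has uniform exponential growth if $\omega(G)>1$. $U^n=\{u_1\cdots u_n:u_i\in U\}$. *)

(* Defs.v *)
From Stdlib Require Import Reals Lra List ClassicalEpsilon.
From Coquelicot Require Import Coquelicot.
Import ListNotations.
Open Scope R_scope.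

Record Group := {
  gcar :> Type;
  gmul : gcar -> gcar -> gcar;
  gone : gcar;
  ginv : gcar -> gcar;
  gmul_assoc : forall x y z, gmul x (gmul y z) = gmul (gmul x y) z;
  gmul_1l : forall x, gmul gone x = x;
  gmul_Vl : forall x, gmul (ginv x) x = gone
}.

Arguments gmul {g}.
Arguments gone {g}.
Arguments ginv {g}.

Definition prod_group (H1 H2 : Group) : Group.
Proof.
refine {| gcar := (gcar H1 * gcar H2)%type;
          gmul := fun x y => (gmul (fst x) (fst y), gmul (snd x) (snd y));
          gone := (gone, gone);
          ginv := fun x => (ginv (fst x), ginv (snd x)) |}.
- intros [a b] [c d] [e f]; simpl; now rewrite !gmul_assoc.
- intros [a b]; simpl; now rewrite !gmul_1l.
- intros [a b]; simpl; now rewrite !gmul_Vl.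
Defined.

Definition word_eval {G : Group} (w : list G) : G := fold_right gmul gone w.

Definition sym_letter {G : Group} (S : list G) (x : G) : Prop :=
  In x S \/ In (ginv x) S.

Definition generates {G : Group} (S : list G) : Prop :=
  forall g : G, exists w : list G,
    (forall x, In x w -> sym_letter S x) /\ word_eval w = g.

Definition finitely_generated (G : Group) : Prop :=
  exists S : list G, generates S.

Definition infinite_group (G : Group) : Prop :=
  ~ exists l : list G, forall x : G, In x l.

(** Cardinality of a finite subset (arbitrary value if the set is infinite). *)
Definition has_card {T : Type} (P : T -> Prop) (k : nat) : Prop :=
  exists l : list T, NoDup l /\ (forall x, In x l <-> P x) /\ length l = k.

Definition card {T : Type} (P : T -> Prop) : nat :=
  epsilon (inhabits 0%nat) (fun k => has_card P k).

Definition ball {G : Group} (S : list G) (n : nat) : G -> Prop :=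
  fun g => exists w : list G,
    (length w <= n)%nat /\ (forall x, In x w -> sym_letter S x) /\ word_eval w = g.

Definition growth_rate {G : Group} (S : list G) : Rbar :=
  Lim_seq (fun n => Rpower (INR (card (ball S n))) (/ INR n)).

Definition uniform_growth_rate (G : Group) : Rbar :=
  Glb_Rbar (fun x => exists S : list G, generates S /\ growth_rate S = Finite x).

Definition has_uniform_exponential_growth (G : Group) : Prop :=
  Rbar_lt (Finite 1) (uniform_growth_rate G).

Definition set_pow {G : Group} (U : list G) (n : nat) : G -> Prop :=
  fun g => exists w : list G,
    length w = n /\ (forall x, In x w -> In x U) /\ word_eval w = g.

Definition list_card {T : Type} (U : list T) : nat := card (fun x => In x U).

(* Main.v *)
Require Import Defs.
From Stdlib Require Import Reals List Lia Lra FinFun Classical ClassicalEpsilon ZArith.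
From Coquelicot Require Import Coquelicot.
Import Defs.
Import ListNotations.
Open Scope R_scope.

Section GroupLemmas.
Variable G : Group.
Lemma gmul_Vr (x : G) : gmul x (ginv x) = gone.
Proof.
  set (y := ginv x).
  rewrite <- (gmul_1l _ (gmul x y)).
  rewrite <- (gmul_Vl _ y) at 1.
  rewrite <- gmul_assoc, (gmul_assoc _ y x y).
  unfold y at 2 3; rewrite gmul_Vl, gmul_1l. apply gmul_Vl.
Qed.
Lemma gmul_1r (x : G) : gmul x gone = x.
Proof. rewrite <- (gmul_Vl _ x), gmul_assoc, gmul_Vr. apply gmul_1l. Qed.
Lemma ginv_inv (x : G) : ginv (ginv x) = x.
Proof.
  rewrite <- (gmul_1r (ginv (ginv x))), <- (gmul_Vl _ x), gmul_assoc, gmul_Vl.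
  apply gmul_1l.
Qed.
Lemma word_eval_app (l1 l2 : list G) :
  word_eval (l1 ++ l2) = gmul (word_eval l1) (word_eval l2).
Proof.
  induction l1 as [|a l IH]; simpl. now rewrite gmul_1l.
  unfold word_eval in *; simpl. rewrite IH. apply gmul_assoc.
Qed.
End GroupLemmas.
Section Card.
Context {T : Type}.
Definition fin (P : T -> Prop) := exists l : list T, forall x, P x -> In x l.

Lemma exact_list (l : list T) : forall P : T -> Prop, (forall x, P x -> In x l) ->
  exists l', NoDup l' /\ forall x, In x l' <-> P x.
Proof.
  induction l as [|a l IH]; intros P HP.
  - exists []; split. constructor. intros x; split; [intros []|intros H; apply (HP x H)].
  - destruct (IH (fun x => P x /\ x <> a)) as [l' [Hn Hl']].
    { intros x [Px Hx]. destruct (HP x Px); [congruence|auto]. }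
    destruct (classic (P a)) as [Pa|nPa].
    + exists (a :: l'); split.
      * constructor; auto. intros Hin. apply Hl' in Hin. tauto.
      * intros x; simpl; rewrite Hl'. split.
        -- intros [<-|[? ?]]; auto.
        -- intros Px. destruct (classic (a = x)); auto.
    + exists l'; split; auto. intros x; rewrite Hl'. split; [tauto|].
      intros Px; split; auto. intros ->; auto.
Qed.

Lemma has_card_unique (P : T -> Prop) k1 k2 : has_card P k1 -> has_card P k2 -> k1 = k2.
Proof.
  intros [l1 [N1 [E1 L1]]] [l2 [N2 [E2 L2]]]. subst.
  apply Nat.le_antisymm; apply NoDup_incl_length; auto; intros x Hx.
  - apply E2, E1, Hx.
  - apply E1, E2, Hx.
Qed.

Lemma fin_card (P : T -> Prop) : fin P -> has_card P (card P).
Proof.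
  intros [l Hl]. destruct (exact_list l P Hl) as [l' [N E]].
  unfold card. apply epsilon_spec. exists (length l'), l'; auto.
Qed.

Lemma card_exact (P : T -> Prop) : fin P -> exists l, NoDup l /\ (forall x, In x l <-> P x) /\ length l = card P.
Proof. intros F. apply (fin_card P F). Qed.

Lemma card_le_cover (P : T -> Prop) l : (forall x, P x -> In x l) -> (card P <= length l)%nat.
Proof.
  intros Hl. destruct (card_exact P) as [l' [N [E L]]]. exists l; auto.
  rewrite <- L. apply NoDup_incl_length; auto. intros x Hx; apply Hl, E, Hx.
Qed.

Lemma card_ge_nodup (P : T -> Prop) l : fin P -> NoDup l -> (forall x, In x l -> P x) -> (length l <= card P)%nat.
Proof.
  intros F N Hl. destruct (card_exact P F) as [l' [N' [E L]]].
  rewrite <- L. apply NoDup_incl_length; auto. intros x Hx; apply E, Hl, Hx.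
Qed.
End Card.

Fixpoint words {T : Type} (A : list T) (n : nat) : list (list T) :=
  match n with
  | O => [[]]
  | S n => flat_map (fun a => map (cons a) (words A n)) A
  end.

Lemma words_length {T : Type} (A : list T) n : length (words A n) = (length A ^ n)%nat.
Proof.
  induction n as [|n IH]; cbn [words]; auto.
  rewrite Nat.pow_succ_r'. rewrite <- IH. generalize (words A n) as W. intros W. clear IH.
  induction A as [|a A IHA]; cbn [flat_map length]; auto.
  rewrite length_app, length_map, IHA. lia.
Qed.

Lemma words_in {T : Type} (A : list T) (w : list T) :
  (forall x, In x w -> In x A) -> In w (words A (length w)).
Proof.
  induction w as [|a w IH]; intros H; simpl. auto.
  apply in_flat_map. exists a; split. apply H; simpl; auto.
  apply in_map. apply IH. intros x Hx; apply H; simpl; auto.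
Qed.
Section Balls.
Variable G : Group.
Variable S : list G.

Lemma sym_in (x : G) : sym_letter S x -> In x (S ++ map ginv S).
Proof.
  intros [H|H]; apply in_or_app; auto. right.
  rewrite <- (ginv_inv G x). apply in_map, H.
Qed.

Lemma ball_fin k : fin (ball S k).
Proof.
  exists (flat_map (fun j => map word_eval (words (S ++ map ginv S) j)) (seq 0 (Datatypes.S k))).
  intros g [w [Lw [Hw Ew]]]. apply in_flat_map. exists (length w). split.
  apply in_seq. lia. rewrite <- Ew. apply in_map, words_in.
  intros x Hx; apply sym_in, Hw, Hx.
Qed.

Lemma ball_one k : ball S k gone.
Proof. exists []; simpl; repeat split; auto. lia. intros x []. Qed.

Lemma ball_le k k' g : (k <= k')%nat -> ball S k g -> ball S k' g.
Proof. intros Hk [w [L [H E]]]. exists w; repeat split; auto. lia. Qed.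

Lemma ball_mul a b x y : ball S a x -> ball S b y -> ball S (a + b) (gmul x y).
Proof.
  intros [w1 [L1 [H1 E1]]] [w2 [L2 [H2 E2]]]. exists (w1 ++ w2); repeat split.
  rewrite length_app; lia.
  intros z Hz; apply in_app_or in Hz; destruct Hz; auto.
  rewrite word_eval_app; congruence.
Qed.

Lemma ball_grow : generates S -> infinite_group G ->
  forall k, exists g, ball S (Datatypes.S k) g /\ ~ ball S k g.
Proof.
  intros Hgen Hinf k. apply NNPP; intros Hn.
  assert (Hs : forall g, ball S (Datatypes.S k) g -> ball S k g).
  { intros g Hg. apply NNPP; intros Hng. apply Hn; exists g; auto. }
  assert (Hall : forall j g, ball S j g -> ball S k g).
  { induction j as [|j IH]; intros g [w [L [H E]]].
    - destruct w; simpl in L; [|lia]. subst. apply ball_one.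
    - destruct w as [|x w]. subst; apply ball_one.
      assert (Hw : ball S j (word_eval w)).
      { exists w; repeat split; auto. simpl in L; lia. intros z Hz; apply H; simpl; auto. }
      apply IH in Hw. apply Hs. subst g.
      change (word_eval (x :: w)) with (gmul x (word_eval w)).
      apply (ball_mul 1 k); auto. exists [x]; simpl; repeat split; auto.
      intros z [<-|[]]. apply H; simpl; auto. apply gmul_1r. }
  apply Hinf. destruct (ball_fin k) as [l Hl]. exists l. intros x.
  destruct (Hgen x) as [w [Hw Ew]]. apply Hl, (Hall (length w)).
  exists w; repeat split; auto.
Qed.

Lemma ball_card_ge : generates S -> infinite_group G ->
  forall k, (k <= card (ball S k))%nat.
Proof.
  intros Hgen Hinf k. induction k as [|k IH]. lia.
  destruct (ball_grow Hgen Hinf k) as [g [Hg Hng]].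
  destruct (card_exact (ball S k) (ball_fin k)) as [l [N [E L]]].
  assert (length (g :: l) <= card (ball S (Datatypes.S k)))%nat.
  { apply card_ge_nodup. apply ball_fin. constructor; auto. intros Hin; apply Hng, E, Hin.
    intros x [<-|Hx]; auto. apply (ball_le k); auto. apply E, Hx. }
  simpl in H. lia.
Qed.
End Balls.
Section Prod.
Variables H1 H2 : Group.

Lemma prod_eval (w : list (prod_group H1 H2)) :
  word_eval w = (word_eval (map fst w), word_eval (map snd w)).
Proof.
  induction w as [|[a b] w IH]. reflexivity.
  change (word_eval (G:=prod_group H1 H2) ((a,b)::w)) with (gmul (g:=prod_group H1 H2) (a,b) (word_eval w)).
  rewrite IH. reflexivity.
Qed.

Lemma U_generates (S1 : list H1) (T : list H2) (lb : list H2) :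
  generates S1 -> generates T -> In gone lb -> (forall y, sym_letter T y -> In y lb) ->
  generates (G := prod_group H1 H2) (list_prod (gone :: S1 ++ map ginv S1) lb).
Proof.
  intros G1 G2 Hg Hl [h1 h2].
  destruct (G1 h1) as [w1 [Hw1 E1]]. destruct (G2 h2) as [w2 [Hw2 E2]].
  exists (map (fun x => (x, gone)) w1 ++ map (fun y => (gone, y)) w2). split.
  - intros z Hz. left. apply in_app_or in Hz. destruct Hz as [Hz|Hz];
      apply in_map_iff in Hz; destruct Hz as [x [<- Hx]]; apply in_prod_iff; split; auto.
    + right. apply sym_in, Hw1, Hx.
    + left; auto.
  - rewrite prod_eval, !map_app, !map_map. simpl.
    rewrite !word_eval_app.
    assert (F : forall (G : Group) (X : Type) (l : list X), word_eval (G:=G) (map (fun _ => gone) l) = gone).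
    { intros G X l; induction l; simpl; auto. unfold word_eval in *; simpl. rewrite IHl. apply gmul_1l. }
    rewrite !F, map_id. rewrite gmul_1r, gmul_1l. f_equal.
    + exact E1.
    + rewrite map_id. exact E2.
Qed.

Lemma U_card_ge (A : list H1) (lb : list H2) :
  In gone A -> NoDup lb -> (length lb <= list_card (list_prod A lb))%nat.
Proof.
  intros HA N. unfold list_card.
  rewrite <- (length_map (fun y => (gone, y) : prod_group H1 H2)).
  apply card_ge_nodup.
  - exists (list_prod A lb); auto.
  - apply Injective_map_NoDup; auto. intros x y E; inversion E; auto.
  - intros z Hz. apply in_map_iff in Hz. destruct Hz as [y [<- Hy]]. apply in_prod_iff; auto.
Qed.

Lemma U_pow_card (A : list H1) (T lb : list H2) m n :
  (forall y, In y lb -> ball T m y) ->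
  (card (set_pow (G := prod_group H1 H2) (list_prod A lb) n) <= length A ^ n * card (ball T (m * n)))%nat.
Proof.
  intros Hlb.
  destruct (card_exact (ball T (m * n)) (ball_fin H2 T (m*n))) as [l [N [E L]]].
  rewrite <- L, <- (words_length A n), <- (length_map word_eval (words A n)), <- length_prod.
  apply card_le_cover. intros [x y] [w [Lw [Hw Ew]]].
  rewrite prod_eval in Ew. injection Ew as Ex Ey. apply in_prod_iff; split.
  - rewrite <- Ex. apply in_map. rewrite <- Lw. replace (length w) with (length (map fst w)) by apply length_map. apply words_in.
    intros a Ha. apply in_map_iff in Ha. destruct Ha as [[a' b'] [<- Hab]].
    apply Hw, in_prod_iff in Hab. tauto.
  - apply E. rewrite <- Ey, <- Lw. clear Ex Ey Lw. induction w as [|[a b] w IH].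
    + rewrite Nat.mul_0_r. apply ball_one.
    + simpl length. rewrite Nat.mul_succ_r, Nat.add_comm.
      change (word_eval (map snd ((a,b)::w))) with (gmul b (word_eval (map snd w))).
      apply ball_mul. apply Hlb. assert (Hab := Hw (a,b) (or_introl eq_refl)).
      apply in_prod_iff in Hab. tauto.
      apply IH. intros z Hz; apply Hw; simpl; auto.
Qed.
End Prod.
Lemma exp_ge1 a : 0 <= a -> 1 <= exp a.
Proof. intros H. rewrite <- exp_0. destruct H as [H| <-]; [left; apply exp_increasing; auto|right; auto]. Qed.

Lemma ln_ge0 y : 1 <= y -> 0 <= ln y.
Proof. intros [H| <-]. rewrite <- ln_1. left. apply ln_increasing; lra. rewrite ln_1; lra. Qed.

Lemma Rpower_ge1 y z : 1 <= y -> 0 <= z -> 1 <= Rpower y z.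
Proof. intros Hy Hz. unfold Rpower. apply exp_ge1. apply Rmult_le_pos; auto. apply ln_ge0; auto. Qed.

Lemma pow_lt_mono a b n : 0 <= a -> a < b -> (0 < n)%nat -> a ^ n < b ^ n.
Proof.
  intros Ha Hab Hn. destruct n as [|n]. lia. simpl.
  assert (a ^ n <= b ^ n) by (apply pow_incr; lra).
  assert (0 < b ^ n) by (apply pow_lt; lra).
  assert (0 <= a ^ n) by (apply pow_le; lra).
  nra.
Qed.

Lemma small_growth (G : Group) : ~ has_uniform_exponential_growth G ->
  forall w, 1 < w -> exists T : list G, generates T /\
    exists N, forall n, (N <= n)%nat -> (0 < n)%nat -> INR (card (ball T n)) < w ^ n.
Proof.
  intros NU w Hw.
  set (E := fun x => exists S : list G, generates S /\ growth_rate S = Finite x).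
  assert (Hx : exists x, E x /\ x < (1 + w) / 2).
  { apply NNPP; intros Hn. apply NU. unfold has_uniform_exponential_growth, uniform_growth_rate.
    fold E. destruct (Glb_Rbar_correct E) as [_ Hglb].
    assert (Hlb : Rbar_le (Finite ((1 + w) / 2)) (Glb_Rbar E)).
    { apply Hglb. intros x Ex. simpl. apply Rnot_lt_le. intros Hlt. apply Hn. exists x; auto. }
    destruct (Glb_Rbar E) as [g| |]; simpl in *; auto; lra. }
  destruct Hx as [x [[T [Hgen Hgr]] Hxq]].
  exists T; split; auto.
  set (u := fun n => Rpower (INR (card (ball T n))) (/ INR n)).
  assert (Hcard1 : forall n, 1 <= INR (card (ball T n))).
  { intros n. replace 1 with (INR (length [@gone G])) by reflexivity. apply le_INR.
    apply card_ge_nodup. apply ball_fin. constructor; auto. constructor.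
    intros y [<-|[]]. apply ball_one. }
  assert (Hu1 : forall n, 1 <= u n).
  { intros n. apply Rpower_ge1; auto. destruct n. simpl. rewrite Rinv_0; lra.
    left; apply Rinv_0_lt_compat, lt_0_INR; lia. }
  assert (Hli : Rbar_le (Finite 1) (LimInf_seq u)).
  { rewrite <- (LimInf_seq_const 1). apply LimInf_le. exists 0%nat; intros n _; auto. }
  assert (Hle := LimSup_LimInf_seq_le u).
  unfold growth_rate in Hgr. fold u in Hgr. unfold Lim_seq in Hgr.
  destruct (ex_LimSup_seq u) as [ls Hls]. rewrite (is_LimSup_seq_unique u ls Hls) in Hgr, Hle.
  assert (Hev : exists N, forall n, (N <= n)%nat -> u n < w).
  { destruct ls as [l| |]; destruct (LimInf_seq u) as [a| |]; simpl in Hgr, Hle, Hli;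
      try discriminate; try contradiction.
    injection Hgr as Hgr.
    assert (Hep : 0 < w - l) by lra.
    destruct (Hls (mkposreal _ Hep)) as [_ [N HN]]. exists N; intros n Hn.
    specialize (HN n Hn). simpl in HN. lra. }
  destruct Hev as [N HN]. exists N. intros n Hn Hn0.
  specialize (HN n Hn). unfold u in HN.
  assert (Hc : 0 < INR (card (ball T n))) by (specialize (Hcard1 n); lra).
  replace (INR (card (ball T n))) with (Rpower (Rpower (INR (card (ball T n))) (/ INR n)) (INR n)).
  2:{ rewrite Rpower_mult, Rinv_l. apply Rpower_1; auto. apply not_0_INR; lia. }
  rewrite Rpower_pow. 2:{ unfold Rpower; apply exp_pos. }
  apply pow_lt_mono; auto. left; unfold Rpower; apply exp_pos.
Qed.
Lemma nat_unbounded (r : R) : exists m : nat, r < INR m.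
Proof.
  destruct (archimed r) as [H _]. exists (Z.to_nat (up r)).
  destruct (Z_le_gt_dec 0 (up r)) as [Hz|Hz].
  - rewrite INR_IZR_INZ, Z2Nat.id; auto.
  - assert (IZR (up r) < 0) by (apply IZR_lt; lia). pose proof (pos_INR (Z.to_nat (up r))). lra.
Qed.

Theorem proposition2p14 (H1 H2 : Group) :
  finitely_generated H1 ->
  finitely_generated H2 ->
  infinite_group H2 ->
  ~ has_uniform_exponential_growth H2 ->
  forall alpha beta : R, 0 < alpha -> 0 < beta ->
  exists U : list (prod_group H1 H2),
    generates U /\
    exists n : nat, (0 < n)%nat /\
      INR (card (set_pow U n)) <
      Rpower (alpha * INR (list_card U)) (beta * INR n).
Proof.
  intros [S1 HS1] _ Hinf NU alpha beta Ha Hb.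
  set (A := gone :: S1 ++ map ginv S1).
  set (c := INR (length A)).
  assert (Hc : 1 <= c) by (unfold c, A; simpl length; rewrite S_INR; pose proof (pos_INR (length (S1 ++ map ginv S1))); lra).
  set (K := Rpower (2 * c) (/ beta)).
  destruct (nat_unbounded (K / alpha)) as [m0 Hm0].
  set (m := S m0).
  assert (Hm : 1 <= INR m) by (unfold m; rewrite S_INR; pose proof (pos_INR m0); lra).
  assert (HmK : K <= alpha * INR m).
  { unfold m; rewrite S_INR. apply Rmult_lt_compat_l with (r := alpha) in Hm0; auto.
    replace (alpha * (K / alpha)) with K in Hm0 by (field; lra). nra. }
  set (w := Rpower 2 (/ (2 * INR m))).
  assert (Hw1 : 1 < w).
  { unfold w. rewrite <- (Rpower_O 2) at 1 by lra. apply Rpower_lt. lra.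
    apply Rinv_0_lt_compat; lra. }
  assert (Hwm : w ^ m < 2).
  { unfold w. rewrite <- Rpower_pow by (unfold Rpower; apply exp_pos).
    rewrite Rpower_mult. replace (/ (2 * INR m) * INR m) with (/2) by (field; lra).
    assert (Hr : Rpower 2 (/2) < Rpower 2 1) by (apply Rpower_lt; lra).
    rewrite Rpower_1 in Hr by lra. exact Hr. }
  destruct (small_growth H2 NU w Hw1) as [T [HT [N HN]]].
  destruct (card_exact (ball T m) (ball_fin H2 T m)) as [l [Nl [El Ll]]].
  exists (list_prod A l). split.
  { apply (U_generates H1 H2 S1 T l); auto. apply El, ball_one.
    intros y Hy. apply El. exists [y]; simpl; repeat split. unfold m; lia.
    intros z [<-|[]]; auto. apply gmul_1r. }
  exists (S N). split. lia.
  assert (Hup := U_pow_card H1 H2 A T l m (S N) (fun y Hy => proj1 (El y) Hy)).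
  assert (Hb2 := HN (m * S N)%nat ltac:(unfold m; lia) ltac:(unfold m; lia)).
  assert (HU : (m <= list_card (list_prod A l))%nat).
  { eapply Nat.le_trans. apply (ball_card_ge H2 T HT Hinf m). rewrite <- Ll.
    apply U_card_ge; auto. unfold A; simpl; auto. }
  apply le_INR in Hup, HU. rewrite mult_INR, pow_INR in Hup. fold c in Hup.
  set (R1 := Rpower (alpha * INR (list_card (list_prod A l))) beta).
  assert (Hpos : 0 < alpha * INR (list_card (list_prod A l))) by (apply Rmult_lt_0_compat; lra).
  assert (HR1 : 2 * c <= R1).
  { unfold R1. replace (2 * c) with (Rpower K beta).
    2:{ unfold K. rewrite Rpower_mult, Rinv_l by lra. apply Rpower_1; lra. }
    apply Rle_Rpower_l. lra. split. unfold K, Rpower; apply exp_pos.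
    eapply Rle_trans; [apply HmK|]. apply Rmult_le_compat_l; lra. }
  apply Rlt_le_trans with (R1 ^ S N).
  2:{ unfold R1. rewrite <- Rpower_mult, Rpower_pow. apply Rle_refl. unfold Rpower; apply exp_pos. }
  eapply Rle_lt_trans; [apply Hup|].
  assert (Hcn : 0 < c ^ S N) by (apply pow_lt; lra).
  eapply Rlt_le_trans. apply Rmult_lt_compat_l; [exact Hcn|exact Hb2].
  rewrite pow_mult, <- Rpow_mult_distr. apply Rlt_le, pow_lt_mono; try lia.
  assert (0 < w ^ m) by (apply pow_lt; lra). nra.
  assert (0 < w ^ m) by (apply pow_lt; lra). nra.
Qed.
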